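(* Let $n\ge2$ be an integer, $\nu\in\{1,2,\dots,n\}$ and $N=2n+1$. Let $z_1,\dots,z_N$ be the roots of the polynomial \[s_n(z)+z^Ns_n(1/z),\qquad s_n(z):=\sum_{j=0}^q\frac{(-z^\nu)^j}{\nu^jj!},\qquad q:=\lfloor n/\nu\rfloor.\] Then all $z_k$ lie on the unit circle, the numbers $t_k:=\arg z_k\in[0,2\pi)$ are pairwise distinct, and for every trigonometric polynomial \[T_n(t)=\sum_{m=1}^n\tau_m(t),\qquad\tau_m(t)=a_m\cos mt+b_m\sin mt,\quad a_m,b_m\in\mathbb{R},\] the identity $\tau_\nu(t)\equiv\sum_{k=1}^NT_n(t-t_k)$ holds for all real $t$. *)

(* Defs.v *)
From HB Require Import structures.
From mathcomp Require Import all_boot all_order all_algebra.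
From mathcomp Require Import all_classical all_reals all_analysis.
From mathcomp Require Import complex.
Set Implicit Arguments. Unset Strict Implicit. Unset Printing Implicit Defensive.
Import Order.TTheory GRing.Theory Num.Theory.
Local Open Scope ring_scope.
Local Open Scope complex_scope.

Definition s_poly (R : realType) (n nu : nat) : {poly R[i]} :=
  \sum_(j < (n %/ nu).+1)
     (((-1) ^+ j) / ((nu ^ j * j`!)%N%:R)) *: 'X^(nu * j).

(* z^N s_n(1/z) with N = 2n+1 (all exponents nu*j <= n < N) *)
Definition s_rev_poly (R : realType) (n nu : nat) : {poly R[i]} :=
  \sum_(j < (n %/ nu).+1)
     (((-1) ^+ j) / ((nu ^ j * j`!)%N%:R)) *: 'X^((2 * n).+1 - nu * j).

Definition P_poly (R : realType) (n nu : nat) : {poly R[i]} :=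
  s_poly R n nu + s_rev_poly R n nu.

Definition trig_poly (R : realType) (n : nat) (a b : nat -> R) (t : R) : R :=
  \sum_(1 <= m < n.+1) (a m * cos (m%:R * t) + b m * sin (m%:R * t)).

(* Main.v *)
Require Import Defs.
From HB Require Import structures.
From mathcomp Require Import all_boot all_order all_algebra.
From mathcomp Require Import all_classical all_reals all_analysis.
From mathcomp Require Import complex.
From mathcomp Require Import zify ring lra.
Import Order.TTheory GRing.Theory Num.Theory.
Local Open Scope ring_scope.

Definition sg (C : numClosedFieldType) (n nu : nat) : {poly C} :=
  \sum_(j < (n %/ nu)%N.+1)
     (((-1) ^+ j) / ((nu ^ j * j`!)%N%:R)) *: 'X^(nu * j).
Definition Ag (C : numClosedFieldType) (n nu : nat) : {poly C} :=
  \sum_(j < (n %/ nu)%N.+1)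
     (((-1) ^+ j) / ((nu ^ j * j`!)%N%:R)) *: 'X^((2 * n).+1 - nu * j).

Lemma sg_eq (R : realType) n nu : s_poly R n nu = sg (R[i]) n nu.
Proof. by []. Qed.
Lemma Ag_eq (R : realType) n nu : s_rev_poly R n nu = Ag (R[i]) n nu.
Proof. by []. Qed.

Definition ef (C : numClosedFieldType) (k : nat) (w : C) :=
  \sum_(j < k.+1) w ^+ j / (j`!)%:R.
Arguments ef {C} k w.

Section EK.
Variable C : numClosedFieldType.
Lemma cjD (x y : C) : (x + y)^* = x^* + y^*. Proof. exact: rmorphD. Qed.
Lemma cjB (x y : C) : (x - y)^* = x^* - y^*. Proof. exact: rmorphB. Qed.
Lemma cjN (x : C) : (- x)^* = - x^*. Proof. exact: rmorphN. Qed.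
Lemma cjM (x y : C) : (x * y)^* = x^* * y^*. Proof. exact: rmorphM. Qed.
Lemma cjV (x : C) : (x^-1)^* = (x^*)^-1. Proof. exact: fmorphV. Qed.
Lemma cj1 : (1 : C)^* = 1. Proof. exact: rmorph1. Qed.
Lemma cj0 : (0 : C)^* = 0. Proof. exact: rmorph0. Qed.
Lemma cjX (x : C) k : (x ^+ k)^* = x^* ^+ k. Proof. exact: rmorphXn. Qed.
Lemma cj_sum (I : Type) (r : seq I) (F : I -> C) : (\sum_(i <- r) F i)^* = \sum_(i <- r) (F i)^*.
Proof. exact: rmorph_sum. Qed.


Definition kap (k j : nat) : C :=
  ((j.-1)`!)%:R^-1 - (if (j <= k)%N then (j`!)%:R^-1 else 0).

Lemma kap_id k w : \sum_(j < k.+2) kap k j * w ^+ j = 1 - (1 - w) * ef k w.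
Proof.
rewrite /kap.
under eq_bigr do rewrite mulrBl.
rewrite sumrB big_ord_recl /= fact0 invr1 mul1r expr0.
rewrite [X in _ - X]big_ord_recr /= ltnn mul0r addr0.
under [X in _ + X - _]eq_bigr do rewrite /bump /= add1n /= exprS mulrCA.
rewrite -mulr_sumr.
under [X in _ - X]eq_bigr => j _ do rewrite (leq_ord j) mulrC.
under [X in w * X]eq_bigr do rewrite add0n mulrC. by rewrite /ef; ring.
Qed.

Lemma kap_ge0 k j : 0 <= kap k j.
Proof.
rewrite /kap; case: ifP => _; last by rewrite subr0 invr_ge0 ler0n.
case: j => [|j] /=; first by rewrite fact0 subrr.
rewrite subr_ge0 lef_pV2 ?posrE ?ltr0n ?fact_gt0 // ler_nat factS.
by rewrite leq_pmull.
Qed.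

Lemma kap_gt0 k j : (2 <= j)%N -> 0 < kap k j.
Proof.
move=> hj; rewrite /kap; case: ifP => _; last by rewrite subr0 invr_gt0 ltr0n fact_gt0.
case: j hj => [|j] //= hj.
rewrite subr_gt0 ltf_pV2 ?posrE ?ltr0n ?fact_gt0 // ltr_nat factS.
rewrite -[X in (X < _)%N]mul1n ltn_pmul2r ?fact_gt0 //.
Qed.

Lemma kap_conj k j : (kap k j)^* = kap k j.
Proof.
rewrite /kap rmorphB fmorphV rmorph_nat; case: ifP => _; last by rewrite rmorph0.
by rewrite fmorphV rmorph_nat.
Qed.

Lemma ef_nz k (w : C) : `|w| <= 1 -> (`|w| < 1 \/ (2 <= k)%N) -> ef k w != 0.
Proof.
move=> hw1 hor; apply/negP => /eqP he.
have hT : \sum_(j < k.+2) kap k j * w ^+ j = 1 by rewrite kap_id he mulr0 subr0.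
have hT1 : \sum_(j < k.+2) kap k j = 1.
  have := kap_id k 1; rewrite subrr mul0r subr0 => <-.
  by apply: eq_bigr => j _; rewrite expr1n mulr1.
have hkap0 : kap k 0 = 0 by rewrite /kap leq0n subrr.
have hw1c := hw1.
move: hw1c; rewrite le_eqVlt => /orP[/eqP hw1'|hw]; last first.
  have : `|\sum_(j < k.+2) kap k j * w ^+ j| <= `|w|.
    apply: le_trans (ler_norm_sum _ _ _) _.
    rewrite -[X in _ <= X]mul1r -hT1 mulr_suml; apply: ler_sum => -[[|j] hj] _ /=.
      by rewrite hkap0 mul0r normr0 mul0r.
    rewrite normrM ger0_norm ?kap_ge0 // normrX ler_wpM2l ?kap_ge0 //.
    by rewrite exprS ler_piMr ?normr_ge0 // exprn_ile1 ?normr_ge0 // ltW.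
  rewrite hT normr1 => h; have := lt_le_trans hw h; by rewrite ltxx.
case: hor => [h|hk]; first by move: h; rewrite hw1' ltxx.
have hS : \sum_(j < k.+2) kap k j * `|1 - w ^+ j| ^+ 2 = 0.
  transitivity (\sum_(j < k.+2) (2 * kap k j - kap k j * w ^+ j - (kap k j * w ^+ j)^* )).
    apply: eq_bigr => j _; rewrite normCK rmorphB rmorph1 rmorphM /= kap_conj.
    have hv : w ^+ j * (w ^+ j)^* = 1 by rewrite -normCK normrX hw1' !expr1n.
    have e : (1 - w ^+ j) * (1 - (w ^+ j)^*) = 2 - w ^+ j - (w ^+ j)^* by rewrite mulrBl mul1r mulrBr mulr1 hv; ring.
    rewrite e; ring.
  rewrite sumrB sumrB -mulr_sumr hT1 -rmorph_sum hT rmorph1; ring.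
have hnn : forall j : 'I_k.+2, true -> 0 <= kap k j * `|1 - w ^+ j| ^+ 2.
  by move=> j _; rewrite mulr_ge0 ?kap_ge0 ?exprn_ge0 ?normr_ge0.
have h0 := psumr_eq0P hnn hS.
have hpow (j : nat) (hj : (j < k.+2)%N) : (2 <= j)%N -> w ^+ j = 1.
  move=> h2; have := h0 (Ordinal hj) isT; move/eqP; rewrite mulf_eq0.
  rewrite (gt_eqF (kap_gt0 _ _ h2)) /= expf_eq0 /= normr_eq0 subr_eq0.
  by move/eqP => <-.
have w2 := hpow 2%N ltac:(lia) isT.
have w3 := hpow 3%N ltac:(lia) isT.
have w1 : w = 1 by move: w3; rewrite exprS w2 mulr1.
have : 1 <= ef k w.
  rewrite w1 /ef big_ord_recl expr1n fact0 divr1 lerDl sumr_ge0 // => j _.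
by rewrite he ler10.
Qed.
End EK.

Section Gen.
Variable C : numClosedFieldType.
Variables n nu : nat.
Hypothesis hn : (2 <= n)%N.
Hypothesis hnu : (1 <= nu <= n)%N.
Local Notation N := ((2 * n)%N.+1).
Local Notation q := (n %/ nu)%N.
Local Notation s := (sg C n nu).
Local Notation A := (Ag C n nu).
Definition cc (j : nat) : C := ((-1) ^+ j) / ((nu ^ j * j`!)%N%:R).

Lemma s_horner y : s.[y] = \sum_(j < q.+1) cc j * y ^+ (nu * j)%N.
Proof. by rewrite /sg horner_sum; apply: eq_bigr => j _; rewrite hornerZ hornerXn. Qed.

Lemma A_horner y : A.[y] = \sum_(j < q.+1) cc j * y ^+ (N - nu * j)%N.
Proof. by rewrite /Ag horner_sum; apply: eq_bigr => j _; rewrite hornerZ hornerXn. Qed.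

Lemma nuj_le (j : 'I_q.+1) : (nu * j <= n)%N.
Proof.
have := ltn_ord j. move: hnu => /andP[h1 h2].
have : (nu * (n %/ nu) <= n)%N by rewrite mulnC leq_trunc_div.
move=> h3 h4. apply: leq_trans h3. rewrite leq_mul2l. by rewrite -ltnS h4 orbT.
Qed.

Lemma A_rec y : y != 0 -> A.[y] = y ^+ N * s.[y^-1].
Proof.
move=> y0; rewrite A_horner s_horner mulr_sumr; apply: eq_bigr => j _.
rewrite exprVn mulrCA expfB //. have := nuj_le j. lia.
Qed.

Lemma s_rec y : y != 0 -> s.[y] = y ^+ N * A.[y^-1].
Proof.
move=> y0; rewrite A_rec ?invr_eq0 // invrK mulrA -exprMn mulfV // expr1n mul1r //.
Qed.

Lemma s0 : s.[0] = 1.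
Proof.
rewrite s_horner big_ord_recl /= muln0 expr0 mulr1 big1 ?addr0.
  by rewrite /cc expr0 expn0 mul1n fact0 divr1.
move=> j _; rewrite /bump /= add1n expr0n /=.
have -> : (nu * j.+1 == 0)%N = false by move: hnu; lia.
by rewrite mulr0.
Qed.

Lemma A_size_monic : A \is monic /\ size A = N.+1.
Proof.
rewrite /Ag big_ord_recl /=.
set B := \sum_(i < _) _.
have hB : (size B <= N)%N.
  apply: leq_trans (size_sum _ _ _) _; apply/bigmax_leqP => j _.
  apply: leq_trans (size_scale_leq _ _) _; rewrite size_polyXn.
  rewrite /bump /=; move: hnu; lia.
have e0 : cc 0 = 1 by rewrite /cc expr0 expn0 mul1n fact0 divr1.
rewrite /cc in e0; rewrite muln0 subn0 e0 scale1r.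
have hs : (size B < size ('X^N : {poly C}))%N by rewrite size_polyXn.
by rewrite monicE lead_coefDl // lead_coefXn size_polyDl // size_polyXn.
Qed.

Lemma s_ef u : s.[u] = ef q (- (u ^+ nu) / nu%:R).
Proof.
rewrite s_horner /ef; apply: eq_bigr => -[j hj] _ /=.
have h1 : (nu%:R : C) != 0 by rewrite pnatr_eq0 -lt0n; case/andP: hnu.
have h2 : ((j`!)%:R : C) != 0 by rewrite pnatr_eq0 -lt0n fact_gt0.
rewrite /cc natrM natrX exprM.
rewrite exprMn exprVn [(- u ^+ nu) ^+ j]exprNn invfM. ring.
Qed.

Lemma s_nz u : `|u| <= 1 -> s.[u] != 0.
Proof.
move=> hu; rewrite s_ef.
have hw : `|- u ^+ nu / nu%:R| = `|u| ^+ nu / nu%:R.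
  by rewrite normrM normrN normrX normfV normr_nat.
have hnu0 : (0 < nu%:R :> C) by rewrite ltr0n; case/andP: hnu.
have hun : `|u| ^+ nu <= 1 by rewrite exprn_ile1.
have hle : `|u| ^+ nu / nu%:R <= nu%:R^-1.
  by rewrite -[X in _ <= X]mul1r ler_wpM2r // invr_ge0 ltW.
apply: ef_nz; rewrite hw.
  apply: le_trans (hle) _; rewrite invf_le1 // ler1n; by case/andP: hnu.
have [e1|hnu2] : nu = 1%N \/ (2 <= nu)%N by move: hnu; lia.
  by right; rewrite e1 divn1.
left; apply: le_lt_trans (hle) _; by rewrite invf_lt1 // ltr1n.
Qed.


Lemma A_fact : exists r : seq C,
  [/\ A = \prod_(a <- r) ('X - a%:P), size r = N & forall a, a \in r -> `|a| < 1].
Proof.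
have [r hr] := closed_field_poly_normal A.
have [hm hsz] := A_size_monic.
move: hm; rewrite monicE => /eqP hm.
rewrite hm scale1r in hr.
exists r; split => //.
  by move: hsz; rewrite hr size_prod_XsubC => -[].
move=> a ha.
have hroot : root A a by rewrite hr root_prod_XsubC.
rewrite real_ltNge ?normr_real ?real1 //; apply/negP => h1.
have a0 : a != 0 by rewrite -normr_gt0 (lt_le_trans ltr01 h1).
move: hroot; rewrite /root A_rec // mulf_eq0 expf_eq0 (negbTE a0) andbF /=.
apply/negP; apply: s_nz.
by rewrite normfV invf_le1 // (lt_le_trans ltr01 h1).
Qed.

Lemma poly_eq_nz (p p' : {poly C}) : (forall x, x != 0 -> p.[x] = p'.[x]) -> p = p'.
Proof.
move=> h; apply/eqP; rewrite -subr_eq0; apply/negPn/negP => hd.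
set d := p - p' in hd.
pose rs := [seq (i.+1)%:R : C | i <- iota 0 (size d)].
have hall : all (root d) rs.
  apply/allP => x /mapP [i _ ->]; rewrite /root /d hornerD hornerN h ?subrr //.
have hu : uniq rs.
  by rewrite map_inj_uniq ?iota_uniq // => i j /eqP; rewrite eqr_nat => /eqP [].
have := max_poly_roots hd hall hu.
by rewrite size_map size_iota ltnn.
Qed.

Lemma prod_rev (I : Type) (r : seq I) (g : I -> C) y : y != 0 ->
  y ^+ size r * \prod_(i <- r) (y^-1 - g i) = \prod_(i <- r) (1 - g i * y).
Proof.
move=> y0; elim: r => [|a r IH]; first by rewrite !big_nil expr0 mul1r.
rewrite !big_cons /= exprS -IH.
rewrite mulrACA; congr (_ * _).
by rewrite mulrBr mulfV // mulrC.
Qed.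

Definition Lf (a : C) : {poly C} := 1 - a%:P * 'X.

Lemma Lf_horner a y : (Lf a).[y] = 1 - a * y.
Proof. by rewrite /Lf hornerD hornerN hornerCM hornerX hornerC. Qed.

Lemma Lf_deriv a : (Lf a)^`() = (- a)%:P.
Proof. by rewrite /Lf derivB derivC sub0r derivM derivC mul0r add0r derivX mulr1 polyCN. Qed.

Lemma s_prod (r : seq C) : A = \prod_(a <- r) ('X - a%:P) -> size r = N ->
  s = \prod_(a <- r) Lf a.
Proof.
move=> hA hsz; apply: poly_eq_nz => y y0.
rewrite s_rec // hA !horner_prod -hsz.
under eq_bigr do rewrite hornerXsubC.
rewrite (@prod_rev C r id y) //.
by apply: eq_bigr => a _; rewrite Lf_horner.
Qed.

Lemma cc_conj j : (cc j)^* = cc j.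
Proof. by rewrite /cc rmorphM rmorphXn rmorphN1 fmorphV rmorph_nat. Qed.

Lemma conj_s y : (s.[y])^* = s.[y^*].
Proof.
rewrite !s_horner cj_sum; apply: eq_bigr => j _.
by rewrite cjM cjX cc_conj.
Qed.

Lemma blaschke (a z : C) : `|a| < 1 ->
  (`|z| < 1 -> `|z - a| < `|1 - a^* * z|) /\ (1 < `|z| -> `|1 - a^* * z| < `|z - a|).
Proof.
move=> ha.
have hid : `|1 - a^* * z| ^+ 2 - `|z - a| ^+ 2 = (1 - `|a| ^+ 2) * (1 - `|z| ^+ 2).
  rewrite !normCK !cjB !cj1 !cjM conjCK; ring.
have ha2 : 0 < 1 - `|a| ^+ 2 by rewrite subr_gt0 exprn_ilt1.
have hsq (x y : C) : (`|x| ^+ 2 < `|y| ^+ 2) = (`|x| < `|y|).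
  by rewrite ltr_pXn2r // nnegrE normr_ge0.
split => hz.
  rewrite -hsq -subr_gt0 hid mulr_gt0 // subr_gt0 exprn_ilt1 //.
rewrite -hsq -subr_gt0 -opprB hid. rewrite oppr_gt0 pmulr_rlt0 //.
by rewrite subr_lt0 exprn_egt1.
Qed.

Lemma prod_lt (r : seq C) (f g : C -> C) : r != [::] ->
  (forall a, a \in r -> 0 <= f a < g a) ->
  \prod_(a <- r) f a < \prod_(a <- r) g a.
Proof.
elim: r => [//|a r IH] _ h.
rewrite !big_cons.
have /andP[h0 h1] := h a (mem_head _ _).
have hr : forall b, b \in r -> 0 <= f b < g b.
  by move=> b hb; apply: h; rewrite inE hb orbT.
case: r IH hr h => [|b r] IH hr h.
  by rewrite !big_nil !mulr1.
apply: ltr_pM => //; first by rewrite big_seq; apply: prodr_ge0 => c hc; case/andP: (hr c hc).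
exact: IH.
Qed.

Lemma sum_gt0 (r : seq C) (f : C -> C) : r != [::] ->
  (forall a, a \in r -> 0 < f a) -> 0 < \sum_(a <- r) f a.
Proof.
elim: r => [//|a r IH] _ h; rewrite big_cons.
have h0 := h a (mem_head _ _).
have hr : forall b, b \in r -> 0 < f b.
  by move=> b hb; apply: h; rewrite inE hb orbT.
case: r IH hr h => [|b r] IH hr h; first by rewrite big_nil addr0.
by rewrite addr_gt0 // IH.
Qed.

Lemma unit_root z : (s + A).[z] = 0 -> `|z| = 1.
Proof.
move=> hP.
have [r [hA hsz hr]] := A_fact.
have hsr := s_prod r hA hsz.
have hsA : s.[z] = - A.[z] by apply/eqP; rewrite -addr_eq0 -hornerD hP.
have nA : `|A.[z]| = \prod_(a <- r) `|z - a|.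
  by rewrite hA horner_prod normr_prod; apply: eq_bigr => a _; rewrite hornerXsubC.
have nS : `|s.[z]| = \prod_(a <- r) `|1 - a^* * z|.
  rewrite -norm_conjC conj_s hsr horner_prod normr_prod; apply: eq_bigr => a _.
  by rewrite Lf_horner -[RHS]norm_conjC cjB cj1 cjM conjCK.
have hne : r != [::] by rewrite -size_eq0 hsz.
case: (real_ltgtP (normr_real z) (@real1 C)) => hz //.
  have : `|A.[z]| < `|s.[z]|.
    rewrite nA nS; apply: prod_lt hne _ => a ha.
    by rewrite normr_ge0 /=; exact: (blaschke a z (hr a ha)).1 hz.
  by rewrite hsA normrN ltxx.
have : `|s.[z]| < `|A.[z]|.
  rewrite nA nS; apply: prod_lt hne _ => a ha.
  by rewrite normr_ge0 /=; exact: (blaschke a z (hr a ha)).2 hz.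
by rewrite hsA normrN ltxx.
Qed.

Lemma Phi_pos (w : C) : `|w| < 1 -> 0 < (1 - w)^-1 + ((1 - w)^-1)^* - 1.
Proof.
move=> hw.
have hw1 : 1 - w != 0.
  by rewrite subr_eq0; apply/eqP => e; move: hw; rewrite -e normr1 ltxx.
have hw1c : 1 - w^* != 0 by rewrite -cj1 -cjB conjC_eq0.
rewrite cjV cjB cj1.
have -> : (1 - w)^-1 + (1 - w^*)^-1 - 1 = (1 - w * w^*) / ((1 - w) * (1 - w^*)).
  by field; rewrite hw1c hw1.
have -> : (1 - w) * (1 - w^*) = `|1 - w| ^+ 2 by rewrite normCK cjB cj1.
by rewrite -normCK divr_gt0 // ?subr_gt0 ?exprn_ilt1 // exprn_gt0 // normr_gt0.
Qed.

Lemma deriv_prod_at (r : seq C) (L : C -> {poly C}) (f : C -> C) x :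
  (forall a, (L a)^`() = (f a)%:P) -> (forall a, a \in r -> (L a).[x] != 0) ->
  (\prod_(a <- r) L a)^`().[x]
    = (\prod_(a <- r) (L a).[x]) * \sum_(a <- r) f a / (L a).[x].
Proof.
move=> hd; elim: r => [|a r IH] hne.
  by rewrite !big_nil -polyC1 derivC horner0 mulr0.
rewrite !big_cons derivM hornerD !hornerM hd hornerC IH; last first.
  by move=> b hb; apply: hne; rewrite inE hb orbT.
have ha := hne a (mem_head _ _).
by rewrite horner_prod; field.
Qed.

Definition tau (a z : C) := z * (a / (1 - a * z) + 1 / (z - a)).

Lemma tau_pos (a z : C) : `|a| < 1 -> `|z| = 1 -> 0 < tau a z + (tau a z)^*.
Proof.
move=> ha hz1.
have hz0 : z != 0 by rewrite -normr_gt0 hz1 ltr01.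
have hza : z - a != 0.
  by rewrite subr_eq0; apply/eqP => e; move: ha; rewrite -e hz1 ltxx.
have haz : 1 - a * z != 0.
  rewrite subr_eq0; apply/eqP => e.
  have : `|a * z| = 1 by rewrite -e normr1.
  by rewrite normrM hz1 mulr1 => e2; move: ha; rewrite e2 ltxx.
have haz' : 1 - a * z^-1 != 0.
  rewrite subr_eq0; apply/eqP => e.
  have : `|a * z^-1| = 1 by rewrite -e normr1.
  by rewrite normrM normfV hz1 invr1 mulr1 => e2; move: ha; rewrite e2 ltxx.
have e : tau a z = (1 - a * z)^-1 - 1 + (1 - a * z^-1)^-1.
  by rewrite /tau; field; rewrite ?hz0 ?hza ?haz ?haz'.
have h1 : `|a * z| < 1 by rewrite normrM hz1 mulr1.
have h2 : `|a * z^-1| < 1 by rewrite normrM normfV hz1 invr1 mulr1.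
have p1 := Phi_pos _ h1; have p2 := Phi_pos _ h2.
rewrite e !cjD cjN cj1.
set u1 := (1 - a * z)^-1 in p1 *; set u2 := (1 - a * z^-1)^-1 in p2 *.
have -> : u1 - 1 + u2 + (u1^* - 1 + u2^*) = (u1 + u1^* - 1) + (u2 + u2^* - 1) by ring.
exact: addr_gt0.
Qed.

Lemma simple_root z : (s + A).[z] = 0 -> (s + A)^`().[z] != 0.
Proof.
move=> hP; have hz1 := unit_root _ hP.
have [r [hA hsz hr]] := A_fact.
have hsr := s_prod r hA hsz.
have hsA : s.[z] = - A.[z] by apply/eqP; rewrite -addr_eq0 -hornerD hP.
have hza : forall a, a \in r -> z - a != 0.
  move=> a ha; rewrite subr_eq0; apply/eqP => e.
  by have := hr a ha; rewrite -e hz1 ltxx.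
have haz : forall a, a \in r -> 1 - a * z != 0.
  move=> a ha; rewrite subr_eq0; apply/eqP => e.
  have : `|a * z| = 1 by rewrite -e normr1.
  by rewrite normrM hz1 mulr1 => e2; have := hr a ha; rewrite e2 ltxx.
have hA0 : A.[z] != 0.
  rewrite hA horner_prod prodf_seq_neq0; apply/allP => a ha /=.
  by rewrite hornerXsubC hza.
have dA : A^`().[z] = A.[z] * \sum_(a <- r) 1 / (z - a).
  rewrite hA (@deriv_prod_at r (fun a => 'X - a%:P) (fun _ => 1)).
  - by rewrite horner_prod; congr (_ * _); apply: eq_bigr => a _; rewrite hornerXsubC.
  - by move=> a; rewrite derivXsubC polyC1.
  - by move=> a ha; rewrite hornerXsubC hza.
have dS : s^`().[z] = s.[z] * \sum_(a <- r) (- a) / (1 - a * z).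
  rewrite hsr (@deriv_prod_at r Lf (fun a => - a)).
  - by rewrite horner_prod; congr (_ * _); apply: eq_bigr => a _; rewrite Lf_horner.
  - by move=> a; rewrite Lf_deriv.
  - by move=> a ha; rewrite Lf_horner haz.
rewrite derivD hornerD dS dA hsA.
apply/negP => /eqP H.
have hsum : \sum_(a <- r) tau a z = 0.
  rewrite /tau -mulr_sumr big_split /=.
  have -> : \sum_(a <- r) a / (1 - a * z) = - \sum_(a <- r) (- a) / (1 - a * z).
    by rewrite -sumrN; apply: eq_bigr => a _; rewrite mulNr opprK.
  apply/eqP; rewrite mulf_eq0; apply/orP; right.
  move: H; rewrite mulNr -mulrN -mulrDr => /eqP; rewrite mulf_eq0 (negbTE hA0) /=.
  by [].
have hne : r != [::] by rewrite -size_eq0 hsz.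
have : 0 < \sum_(a <- r) (tau a z + (tau a z)^*).
  by apply: sum_gt0 => // a ha; apply: tau_pos => //; apply: hr.
rewrite big_split /= -cj_sum hsum cj0 addr0 ltxx.
by [].
Qed.

Lemma P_distinct (z : 'I_N -> C) : s + A = \prod_(k < N) ('X - (z k)%:P) -> injective z.
Proof.
move=> hP i j hij; apply/eqP; apply/negPn/negP => hne.
have h0 : (s + A).[z i] = 0.
  by rewrite hP horner_prod (bigD1 i) //= hornerXsubC subrr mul0r.
have := simple_root _ h0; rewrite hP (bigD1 i) //= derivM hornerD !hornerM.
rewrite hornerXsubC subrr mul0r addr0 horner_prod (bigD1 j) /=; last by rewrite eq_sym.
by rewrite hornerXsubC hij subrr mul0r mulr0 eqxx.
Qed.

Lemma size_index_enum_ord : size (index_enum 'I_N) = N.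
Proof. by rewrite [index_enum _]unlock -enumT -cardT card_ord. Qed.

Lemma P_recip (z : 'I_N -> C) : s + A = \prod_(k < N) ('X - (z k)%:P) ->
  s + A = \prod_(k < N) Lf (z k).
Proof.
move=> hP; apply: poly_eq_nz => y y0.
have -> : (s + A).[y] = y ^+ N * (s + A).[y^-1].
  by rewrite !hornerD (s_rec _ y0) (A_rec _ y0) mulrDr addrC.
rewrite hP horner_prod -{1}size_index_enum_ord.
under eq_bigr do rewrite hornerXsubC.
rewrite (@prod_rev 'I_N (index_enum 'I_N) z y) // horner_prod.
by apply: eq_bigr => k _; rewrite Lf_horner.
Qed.

Definition Gp (a : C) : {poly C} := \sum_(1 <= m < n.+1) (a ^+ m)%:P * 'X^m.

Lemma G_tel a k : Lf a * \sum_(1 <= m < k.+1) (a ^+ m)%:P * 'X^m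
   = a%:P * 'X - (a ^+ k.+1)%:P * 'X^(k.+1).
Proof.
elim: k => [|k IH]; first by rewrite big_geq // mulr0 !expr1 subrr.
rewrite big_nat_recr //= mulrDr IH /Lf [a ^+ k.+2]exprS polyCM ['X^(k.+2)]exprS.
ring.
Qed.

Lemma newton_dvd (I : Type) (r : seq I) (g : I -> C) :
  'X^(n.+1) %| 'X * (\prod_(i <- r) Lf (g i))^`()
             + (\prod_(i <- r) Lf (g i)) * \sum_(i <- r) Gp (g i).
Proof.
elim: r => [|a r IH].
  by rewrite !big_nil -polyC1 derivC !mulr0 addr0 dvdp0.
rewrite !big_cons derivM Lf_deriv.
set E := \prod_(j <- r) Lf (g j). set Q := \sum_(j <- r) Gp (g j).
have -> : 'X * ((- g a)%:P * E + Lf (g a) * E^`()) + Lf (g a) * E * (Gp (g a) + Q)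
   = Lf (g a) * ('X * E^`() + E * Q) + E * (Lf (g a) * Gp (g a) - (g a)%:P * 'X).
  by rewrite polyCN; ring.
rewrite /Gp G_tel.
have -> : (g a)%:P * 'X - (g a ^+ n.+1)%:P * 'X^(n.+1) - (g a)%:P * 'X
    = (- g a ^+ n.+1)%:P * 'X^(n.+1) by rewrite polyCN; ring.
by rewrite dvdp_add ?dvdp_mull // dvdp_mulIr.
Qed.

Lemma X_derivXn m : 'X * ('X^m)^`() = (m%:R)%:P * 'X^m :> {poly C}.
Proof.
rewrite derivXn; case: m => [|m]; first by rewrite /= mulr0n mulr0 polyC0 mul0r.
by rewrite /= polyC_natr mulrnAr -exprS mulr_natl.
Qed.

Lemma cc_rec j : cc j.+1 * (nu * j.+1)%:R = - cc j.
Proof.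
have h1 : (nu%:R : C) != 0 by rewrite pnatr_eq0 -lt0n; case/andP: hnu.
have h2 : ((j`!)%:R : C) != 0 by rewrite pnatr_eq0 -lt0n fact_gt0.
have h3 : ((j.+1)%:R : C) != 0 by rewrite pnatr_eq0.
have h4 : ((nu ^ j)%:R : C) != 0 by rewrite natrX expf_neq0.
rewrite /cc exprS expnS factS !natrM.
have h3' : 1 + (j%:R : C) != 0 by rewrite addrC natr1 pnatr_eq0.
by field; rewrite h2 h4 h3' h1.
Qed.

Lemma Xs' : 'X * s^`() = - ('X^nu * s) + (cc q)%:P * 'X^(nu * q.+1).
Proof.
suff key : 'X * s^`() + 'X^nu * s = (cc q)%:P * 'X^(nu * q.+1).
  by rewrite -key [X in _ + X]addrC addKr.
rewrite /sg raddf_sum /= mulr_sumr mulr_sumr.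
under eq_bigr do rewrite derivZ -scalerAr X_derivXn -mul_polyC.
under [X in _ + X]eq_bigr do rewrite -scalerAr -exprD -mulnS -mul_polyC.
rewrite big_ord_recl /= muln0 mulr0n polyC0 mul0r mulr0 add0r.
rewrite big_ord_recr /= addrA -big_split /= big1 ?add0r //.
move=> j _; rewrite /bump /= add1n.
rewrite mulrA -polyCM -mulrDl -polyCD.
by have := cc_rec j; rewrite /cc => ->; rewrite addNr polyC0 mul0r.
Qed.

Lemma A_dvd : 'X^(n.+1) %| A.
Proof.
rewrite /Ag; apply: (@big_ind _ (fun p : {poly C} => 'X^(n.+1) %| p)).
- exact: dvdp0.
- by move=> p p' h1 h2; exact: dvdp_add.
move=> j _; rewrite -mul_polyC dvdp_mull // dvdp_exp2l //.
have := nuj_le j; lia.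
Qed.

Lemma dvd_Xderiv k (p : {poly C}) : 'X^(k.+1) %| p -> 'X^(k.+1) %| 'X * p^`().
Proof.
move=> /dvdpP [D ->]; rewrite derivM derivXn /= mulrDr; apply: dvdp_add.
  by rewrite mulrA dvdp_mulIr.
rewrite mulrnAr mulrnAr -mulr_natr mulrC dvdp_mull //.
by rewrite mulrCA -exprS dvdp_mull.
Qed.

Lemma Gp_coef a m : (1 <= m <= n)%N -> (Gp a)`_m = a ^+ m.
Proof.
move=> hm; rewrite /Gp coef_sum.
under eq_bigr do rewrite coefCM coefXn.
have hmem : m \in index_iota 1 n.+1 by rewrite mem_index_iota; move: hm; lia.
have hu : uniq (index_iota 1 n.+1) by rewrite /index_iota iota_uniq.
rewrite (bigD1_seq m hmem hu) /=.
rewrite eqxx mulr1 big1 ?addr0 // => i /negbTE; rewrite eq_sym => ->.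
by rewrite mulr0.
Qed.

Lemma newton_sum (z : 'I_N -> C) : s + A = \prod_(k < N) ('X - (z k)%:P) ->
  forall m, (1 <= m <= n)%N -> \sum_(k < N) z k ^+ m = (m == nu)%:R.
Proof.
move=> hP m hm.
have hE := P_recip _ hP.
set Q := \sum_(k < N) Gp (z k).
have h1 : 'X^(n.+1) %| 'X * (s + A)^`() + (s + A) * Q by rewrite hE; apply: newton_dvd.
have h2 : 'X^(n.+1) %| 'X * A^`() + A * Q.
  by rewrite dvdp_add // ?dvd_Xderiv ?A_dvd // dvdp_mulr // A_dvd.
have h3 : 'X^(n.+1) %| 'X * s^`() + s * Q.
  move: h1; rewrite derivD mulrDr mulrDl.
  have -> : 'X * s^`() + 'X * A^`() + (s * Q + A * Q)
      = ('X * s^`() + s * Q) + ('X * A^`() + A * Q) by ring.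
  by rewrite dvdp_addl.
have hcop : coprimep ('X^(n.+1)) s.
  apply: coprimep_expl; rewrite coprimep_sym.
  have -> : ('X : {poly C}) = 'X - 0%:P by rewrite polyC0 subr0.
  by rewrite coprimep_XsubC /root s0 oner_eq0.
have h4 : 'X^(n.+1) %| s * (Q - 'X^nu).
  move: h3; rewrite Xs'.
  have -> : - ('X^nu * s) + (cc q)%:P * 'X^(nu * q.+1) + s * Q
      = s * (Q - 'X^nu) + (cc q)%:P * 'X^(nu * q.+1) by ring.
  rewrite dvdp_addl // dvdp_mull // dvdp_exp2l //.
  move: hnu => /andP[h1' h2'].
  by rewrite mulnC ltn_ceil.
have h5 : 'X^(n.+1) %| Q - 'X^nu by rewrite -(Gauss_dvdpr _ hcop).
have [D hD] := dvdpP _ _ h5.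
have hQm : Q`_m = ('X^nu)`_m.
  apply/eqP; rewrite -subr_eq0 -coefB hD coefMXn.
  by move: hm => /andP[_ hm2]; rewrite ltnS hm2.
rewrite coefXn /Q coef_sum in hQm.
rewrite -hQm; apply: eq_bigr => k _; by rewrite Gp_coef.
Qed.

End Gen.

Lemma gen_main (C : numClosedFieldType) (n nu : nat) (z : 'I_(2 * n).+1 -> C) :
  (2 <= n)%N -> (1 <= nu <= n)%N ->
  sg C n nu + Ag C n nu = \prod_(k < (2 * n).+1) ('X - (z k)%:P) ->
  [/\ forall k, `|z k| = 1, injective z &
      forall m, (1 <= m <= n)%N -> \sum_(k < (2 * n).+1) z k ^+ m = (m == nu)%:R].
Proof.
move=> hn hnu hP; split.
- move=> k; apply: (unit_root _ _ _ hn hnu).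
  by rewrite hP horner_prod (bigD1 k) //= hornerXsubC subrr mul0r.
- exact: (P_distinct _ _ _ hn hnu _ hP).
- exact: (newton_sum _ _ _ hn hnu _ hP).
Qed.

Section Final.
Variable R : realType.
Local Open Scope complex_scope.

Lemma demoivre (t : R) m :
  (cos t +i* sin t) ^+ m = cos (m%:R * t) +i* sin (m%:R * t).
Proof.
elim: m => [|m IH]; first by rewrite mul0r cos0 sin0.
rewrite exprS IH.
have -> : (m.+1%:R * t) = t + m%:R * t by rewrite -addn1 natrD mulrDl mul1r addrC.
rewrite cosD sinD; simpc; congr (_ +i* _); ring.
Qed.

Lemma sum_complex (I : Type) (r : seq I) (f g : I -> R) :
  \sum_(i <- r) (f i +i* g i) = (\sum_(i <- r) f i) +i* (\sum_(i <- r) g i).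
Proof.
elim: r => [|i r IH]; first by rewrite !big_nil.
by rewrite !big_cons IH.
Qed.

End Final.

Local Open Scope complex_scope.
Theorem theorem2p3 (R : realType) (n nu : nat) (z : 'I_(2 * n).+1 -> R[i]) :
  (2 <= n)%N -> (1 <= nu <= n)%N ->
  P_poly R n nu = \prod_(k < (2 * n).+1) ('X - (z k)%:P) ->
  (forall k, `|z k| = 1) /\
  (forall t : 'I_(2 * n).+1 -> R,
     (forall k, 0 <= t k < 2 * pi /\ z k = (cos (t k)) +i* (sin (t k))) ->
     injective t /\
     (forall (a b : nat -> R) (x : R),
        a nu * cos (nu%:R * x) + b nu * sin (nu%:R * x)
        = \sum_(k < (2 * n).+1) trig_poly n a b (x - t k))).
Proof.
move=> hn hnu hP.
have hP' : sg R[i] n nu + Ag R[i] n nu = \prod_(k < (2 * n).+1) ('X - (z k)%:P).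
  by rewrite -hP.
have [hu hinj hsum] := @gen_main R[i] n nu z hn hnu hP'.
split => // t ht; split.
  by move=> i j e; apply: hinj; rewrite (ht i).2 (ht j).2 e.
move=> a b x.
have hcs m : (1 <= m <= n)%N ->
    \sum_(k < (2 * n).+1) cos (m%:R * t k) = (m == nu)%:R /\
    \sum_(k < (2 * n).+1) sin (m%:R * t k) = 0.
  move=> hm; have := hsum m hm.
  under eq_bigr do rewrite (ht _).2 demoivre.
  rewrite sum_complex.
  have -> : ((m == nu)%:R : R[i]) = ((m == nu)%:R : R) +i* 0.
    by case: (m == nu).
  by case.
have key m : (1 <= m <= n)%N ->
    \sum_(k < (2 * n).+1) (a m * cos (m%:R * (x - t k)) + b m * sin (m%:R * (x - t k)))
    = (m == nu)%:R * (a m * cos (m%:R * x) + b m * sin (m%:R * x)).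
  move=> hm; have [hc hs] := hcs m hm.
  transitivity (\sum_(k < (2 * n).+1)
     ((a m * cos (m%:R * x) + b m * sin (m%:R * x)) * cos (m%:R * t k)
      + (a m * sin (m%:R * x) - b m * cos (m%:R * x)) * sin (m%:R * t k))).
    by apply: eq_bigr => k _; rewrite mulrBr cosB sinB; ring.
  by rewrite big_split /= -!mulr_sumr hc hs mulr0 addr0 mulrC.
rewrite /trig_poly exchange_big /=.
rewrite (eq_big_nat _ _ (F2 := fun m => (m == nu)%:R *
           (a m * cos (m%:R * x) + b m * sin (m%:R * x)))); last first.
  by move=> m hm; rewrite key.
have hmem : nu \in index_iota 1 n.+1 by rewrite mem_index_iota; move: hnu; lia.
have hu' : uniq (index_iota 1 n.+1) by rewrite /index_iota iota_uniq.
rewrite (bigD1_seq nu hmem hu') /= eqxx mul1r big1 ?addr0 // => m /negbTE ->.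
by rewrite mul0r.
Qed.
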